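(* Let $U=(u_1,\dots,u_n)$ be a sequence of (precise) points in $\mathbb{R}^d$ and $W=(w_1,\dots,w_m)$ a sequence of imprecise points, each modeled as a closed $d$-dimensional ball. Then $F^{\max}_1(U,W)$ can be computed in $O(dmn)$ time and $O(d(m+n))$ space.
   Context: For point sequences $A=(a_1,\dots,a_n)$, $B=(b_1,\dots,b_m)$ with Euclidean distance $d(\cdot,\cdot)$, the discrete Fréchet distance $F(A,B)$ is the minimum over all sequences of index pairs from $(1,1)$ to $(n,m)$, each step increasing the first index by one, the second by one, or both by one, of the maximum of $d(a_i,b_j)$ over pairs $(i,j)$ in the sequence. The one-sided discrete Fréchet distance with shortcuts on side $B$ is $F_c(A,B)=\min\{F(A,B')\}$ over all non-empty subsequences $B'$ of $B$ (order preserved). For region sequences $U$, $W$, $F^{\max}_1(U,W)=\max\{F_c(A,B)\}$ over all realizations $A$ of $U$ and $B$ of $W$ (a realization picks a point in each region; a precise point is a one-point region). *)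

(* Defs.v *)
From Stdlib Require Import Reals Lra Lia ZArith List.
Open Scope R_scope.

(* A point of R^d is a function nat -> R; only coordinates 0..d-1 matter. *)
Fixpoint sumR (d : nat) (f : nat -> R) : R :=
  match d with O => 0 | S d' => sumR d' f + f d' end.

Definition dist (d : nat) (p q : nat -> R) : R :=
  sqrt (sumR d (fun k => (p k - q k) ^ 2)).

(* A point sequence of length n is a function nat -> point, indices 0..n-1. *)

Definition coupling (n m : nat) (p : list (nat * nat)) : Prop :=
  (1 <= length p)%nat /\
  nth 0 p (0%nat, 0%nat) = (0%nat, 0%nat) /\
  nth (length p - 1) p (0%nat, 0%nat) = ((n - 1)%nat, (m - 1)%nat) /\
  forall t, (t + 1 < length p)%nat ->
    let (i, j) := nth t p (0%nat, 0%nat) in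
    let (i', j') := nth (t + 1) p (0%nat, 0%nat) in
    (i' = i + 1 /\ j' = j)%nat \/ (i' = i /\ j' = j + 1)%nat \/
    (i' = i + 1 /\ j' = j + 1)%nat.

Definition coupling_cost (d : nat) (A B : nat -> nat -> R)
  (p : list (nat * nat)) : R :=
  fold_right Rmax 0 (map (fun ij => dist d (A (fst ij)) (B (snd ij))) p).

Definition frechet (d n m : nat) (A B : nat -> nat -> R) (v : R) : Prop :=
  (exists p, coupling n m p /\ coupling_cost d A B p = v) /\
  (forall p, coupling n m p -> v <= coupling_cost d A B p).

Definition subseq_idx (k m : nat) (s : nat -> nat) : Prop :=
  (1 <= k)%nat /\ (forall t, (t < k)%nat -> (s t < m)%nat) /\
  (forall t, (t + 1 < k)%nat -> (s t < s (t + 1))%nat).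

(* v = F_c(A,B): one-sided discrete Frechet distance with shortcuts on B *)
Definition frechet_c (d n m : nat) (A B : nat -> nat -> R) (v : R) : Prop :=
  (exists k s, subseq_idx k m s /\ frechet d n k A (fun t => B (s t)) v) /\
  (forall k s v', subseq_idx k m s -> frechet d n k A (fun t => B (s t)) v' ->
     v <= v').

Definition realization (d m : nat) (C : nat -> nat -> R) (r : nat -> R)
  (B : nat -> nat -> R) : Prop :=
  forall j, (j < m)%nat -> dist d (B j) (C j) <= r j.

Definition frechet_max1 (d n m : nat) (U C : nat -> nat -> R) (r : nat -> R)
  (v : R) : Prop :=
  (exists B, realization d m C r B /\ frechet_c d n m U B v) /\
  (forall B v', realization d m C r B -> frechet_c d n m U B v' -> v' <= v).

(* Operands i j k are direct addresses; indirect addressing goes through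
   integer registers.  Only integer constants; no real-to-integer conversion. *)
Inductive instr : Type :=
| IConst (i : nat) (z : Z)
| IAdd (i j k : nat) | ISub (i j k : nat) | IMul (i j k : nat)
| ILoad (i j : nat)
| IStore (i j : nat)
| RofI (i j : nat)
| RAdd (i j k : nat) | RSub (i j k : nat) | RMul (i j k : nat)
| RDiv (i j k : nat)
| RSqrt (i j : nat)
| RLoad (i j : nat)
| RStore (i j : nat)
| JmpILt (i j t : nat)
| JmpRLt (i j t : nat)
| Jmp (t : nat)
| Halt.

Record state : Type := mkState { pc : nat; imem : nat -> Z; rmem : nat -> R }.

Definition updI (f : nat -> Z) (a : nat) (z : Z) : nat -> Z :=
  fun b => if Nat.eqb b a then z else f b.
Definition updR (f : nat -> R) (a : nat) (x : R) : nat -> R :=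
  fun b => if Nat.eqb b a then x else f b.

Definition addr (z : Z) : nat := Z.to_nat z.

Definition step (P : list instr) (s s' : state) : Prop :=
  let I := imem s in let Rm := rmem s in let q := pc s in
  match nth q P Halt with
  | IConst i z => s' = mkState (S q) (updI I i z) Rm
  | IAdd i j k => s' = mkState (S q) (updI I i (I j + I k)%Z) Rm
  | ISub i j k => s' = mkState (S q) (updI I i (I j - I k)%Z) Rm
  | IMul i j k => s' = mkState (S q) (updI I i (I j * I k)%Z) Rm
  | ILoad i j => s' = mkState (S q) (updI I i (I (addr (I j)))) Rm
  | IStore i j => s' = mkState (S q) (updI I (addr (I i)) (I j)) Rm
  | RofI i j => s' = mkState (S q) I (updR Rm i (IZR (I j)))
  | RAdd i j k => s' = mkState (S q) I (updR Rm i (Rm j + Rm k))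
  | RSub i j k => s' = mkState (S q) I (updR Rm i (Rm j - Rm k))
  | RMul i j k => s' = mkState (S q) I (updR Rm i (Rm j * Rm k))
  | RDiv i j k => s' = mkState (S q) I (updR Rm i (Rm j / Rm k))
  | RSqrt i j => s' = mkState (S q) I (updR Rm i (sqrt (Rm j)))
  | RLoad i j => s' = mkState (S q) I (updR Rm i (Rm (addr (I j))))
  | RStore i j => s' = mkState (S q) I (updR Rm (addr (I i)) (Rm j))
  | JmpILt i j t =>
      s' = mkState (if Z.ltb (I i) (I j) then t else S q) I Rm
  | JmpRLt i j t =>
      (Rm i < Rm j /\ s' = mkState t I Rm) \/
      (Rm j <= Rm i /\ s' = mkState (S q) I Rm)
  | Jmp t => s' = mkState t I Rm
  | Halt => False
  end.

Definition accessed (P : list instr) (s : state) : list nat :=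
  let I := imem s in
  match nth (pc s) P Halt with
  | IConst i _ => i :: nil
  | IAdd i j k | ISub i j k | IMul i j k => i :: j :: k :: nil
  | ILoad i j => i :: j :: addr (I j) :: nil
  | IStore i j => i :: j :: addr (I i) :: nil
  | RofI i j => i :: j :: nil
  | RAdd i j k | RSub i j k | RMul i j k | RDiv i j k => i :: j :: k :: nil
  | RSqrt i j => i :: j :: nil
  | RLoad i j => i :: j :: addr (I j) :: nil
  | RStore i j => i :: j :: addr (I i) :: nil
  | JmpILt i j _ | JmpRLt i j _ => i :: j :: nil
  | Jmp _ | Halt => nil
  end.

Definition halted (P : list instr) (s : state) : Prop := nth (pc s) P Halt = Halt.

(* exec P S t s s' : the machine goes from s to s' in exactly t steps,
   touching only memory cells with address < S (space bound S) *)
Inductive exec (P : list instr) (Sp : nat) : nat -> state -> state -> Prop :=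
| exec0 : forall s, exec P Sp 0 s s
| execS : forall t s s1 s2,
    (forall a, In a (accessed P s) -> (a < Sp)%nat) ->
    step P s s1 -> exec P Sp t s1 s2 -> exec P Sp (S t) s s2.

(* Input encoding: I[0] = n, I[1] = m, I[2] = d;
   R[i*d + k] = u_i[k] (i < n, k < d),
   R[n*d + j*d + k] = center of w_j [k],  R[n*d + m*d + j] = radius of w_j. *)
Definition init_state (d n m : nat) (U C : nat -> nat -> R) (r : nat -> R)
  : state :=
  mkState 0
    (fun a => match a with
              | 0%nat => Z.of_nat n | 1%nat => Z.of_nat m
              | 2%nat => Z.of_nat d | _ => 0%Z end)
    (fun a =>
       if Nat.ltb a (n * d) then U (a / d)%nat (a mod d)%nat
       else if Nat.ltb a (n * d + m * d) then
         C ((a - n * d) / d)%nat ((a - n * d) mod d)%nat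
       else if Nat.ltb a (n * d + m * d + m) then r (a - n * d - m * d)%nat
       else 0).

(* Main.v *)
Require Import Defs.
From Stdlib Require Import Reals ZArith List.
Open Scope R_scope.
From Stdlib Require Import Lra Lia Arith.
Import ListNotations.
Import Defs.

Ltac rmm := unfold Rmax, Rmin in *; repeat (destruct Rle_dec); lra.

From Stdlib Require Import Reals Lra Lia ZArith List.
Open Scope R_scope.
Import ListNotations.
Import Defs.


Lemma sumR_ext d f g : (forall k, (k < d)%nat -> f k = g k) -> sumR d f = sumR d g.
Proof. induction d; simpl; intros H; auto. rewrite IHd by (intros; apply H; lia). rewrite H by lia; auto. Qed.

Lemma sumR_nonneg d f : (forall k, (k < d)%nat -> 0 <= f k) -> 0 <= sumR d f.
Proof. induction d; simpl; intros H; [lra|]. pose proof (H d ltac:(lia)). pose proof (IHd ltac:(intros; apply H; lia)). lra. Qed.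

Lemma sumR_scale d c f : sumR d (fun k => c * f k) = c * sumR d f.
Proof. induction d; simpl; [ring|]. rewrite IHd; ring. Qed.

Lemma sumR_zero d f : (forall k, (k < d)%nat -> 0 <= f k) -> sumR d f = 0 -> forall k, (k < d)%nat -> f k = 0.
Proof.
  induction d; simpl; intros H Hs k Hk; [lia|].
  pose proof (sumR_nonneg d f ltac:(intros; apply H; lia)). pose proof (H d ltac:(lia)).
  destruct (Nat.eq_dec k d). subst; lra. apply IHd; try lra; try lia. intros; apply H; lia.
Qed.

Lemma dnonneg d p q : 0 <= dist d p q.
Proof. unfold dist; apply sqrt_pos. Qed.

Lemma dsym d p q : dist d p q = dist d q p.
Proof. unfold dist. f_equal. apply sumR_ext; intros; ring. Qed.

Lemma cs d a b : (sumR d (fun k => a k * b k))^2 <= sumR d (fun k => a k ^2) * sumR d (fun k => b k ^ 2).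
Proof.
  induction d; [simpl; lra|cbn [sumR]].
  set (S := sumR d (fun k => a k * b k)) in *.
  set (A := sumR d (fun k => a k ^ 2)) in *.
  set (B := sumR d (fun k => b k ^ 2)) in *.
  assert (HA : 0 <= A) by (apply sumR_nonneg; intros; apply pow2_ge_0).
  assert (HB : 0 <= B) by (apply sumR_nonneg; intros; apply pow2_ge_0).
  set (x := a d) in *. set (y := b d) in *.
  assert (H2 : (2*S*x*y)^2 <= (A*y^2 + B*x^2)^2).
  { assert (0 <= (A*y^2 - B*x^2)^2) by apply pow2_ge_0.
    assert (S^2 * (x^2*y^2) <= A*B*(x^2*y^2)) by (apply Rmult_le_compat_r; [apply Rmult_le_pos; apply pow2_ge_0 | lra]).
    replace ((2*S*x*y)^2) with (4*(S^2*(x^2*y^2))) by ring.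
    replace ((A*y^2 + B*x^2)^2) with ((A*y^2 - B*x^2)^2 + 4*(A*B*(x^2*y^2))) by ring.
    lra. }
  assert (H3 : 2*S*x*y <= A*y^2 + B*x^2).
  { assert (0 <= A*y^2 + B*x^2) by (apply Rplus_le_le_0_compat; apply Rmult_le_pos; auto; apply pow2_ge_0).
    destruct (Rle_dec (2*S*x*y) (A*y^2 + B*x^2)); auto. exfalso. nra. }
  replace ((S + x*y)^2) with (S^2 + 2*S*x*y + x^2*y^2) by ring.
  replace ((A + x^2)*(B+y^2)) with (A*B + (A*y^2 + B*x^2) + x^2*y^2) by ring.
  lra.
Qed.

Lemma dtri d p x q : dist d p q <= dist d p x + dist d x q.
Proof.
  unfold dist.
  set (a := fun k => p k - x k). set (b := fun k => x k - q k).
  assert (E1 : sumR d (fun k => (p k - q k)^2) = sumR d (fun k => a k ^2) + 2 * sumR d (fun k => a k * b k) + sumR d (fun k => b k ^2)).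
  { unfold a, b. clear a b. induction d; cbn [sumR]; [ring|]. rewrite IHd. ring. }
  rewrite E1.
  set (A := sumR d (fun k => a k ^ 2)). set (B := sumR d (fun k => b k ^ 2)).
  set (S := sumR d (fun k => a k * b k)).
  assert (HA : 0 <= A) by (apply sumR_nonneg; intros; apply pow2_ge_0).
  assert (HB : 0 <= B) by (apply sumR_nonneg; intros; apply pow2_ge_0).
  change (sumR d (fun k => (p k - x k)^2)) with A.
  change (sumR d (fun k => (x k - q k)^2)) with B.
  pose proof (cs d a b) as Hc. fold S A B in Hc.
  pose proof (sqrt_pos A). pose proof (sqrt_pos B).
  pose proof (sqrt_sqrt A HA). pose proof (sqrt_sqrt B HB).
  assert (HS : S <= sqrt A * sqrt B).
  { assert (S^2 <= (sqrt A * sqrt B)^2).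
    { replace ((sqrt A * sqrt B)^2) with ((sqrt A * sqrt A) * (sqrt B * sqrt B)) by ring.
      rewrite H1, H2. lra. }
    assert (0 <= sqrt A * sqrt B) by (apply Rmult_le_pos; auto).
    destruct (Rle_dec S (sqrt A * sqrt B)); auto. exfalso. nra. }
  rewrite <- (sqrt_lem_1 ((sqrt A + sqrt B) * (sqrt A + sqrt B)) (sqrt A + sqrt B)) by nra.
  apply sqrt_le_1_alt.
  replace ((sqrt A + sqrt B) * (sqrt A + sqrt B)) with (sqrt A * sqrt A + sqrt B * sqrt B + 2 * (sqrt A * sqrt B)) by ring.
  rewrite H1, H2. lra.
Qed.

Definition far (d : nat) (c : nat -> R) (r : R) (u : nat -> R) : nat -> R :=
  fun k => if Req_EM_T (dist d u c) 0 then c k + (if Nat.eqb k 0 then r else 0)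
           else c k + r * (c k - u k) / dist d u c.

Lemma sumR_first d r : (1 <= d)%nat -> sumR d (fun k => (if Nat.eqb k 0 then r else 0)^2) = r^2.
Proof. induction d as [|d IH]; intros H; [lia|]. destruct d as [|d]. { simpl. ring. }
  cbn [sumR]. cbn [sumR] in IH. rewrite IH by lia. replace (Nat.eqb (S d) 0) with false by reflexivity. ring. Qed.

Lemma far_props d c r u : (1 <= d)%nat -> 0 <= r ->
  dist d (far d c r u) c = r /\ dist d u (far d c r u) = dist d u c + r.
Proof.
  intros Hd Hr. unfold far. destruct (Req_EM_T (dist d u c) 0) as [E|E].
  - assert (Z : forall k, (k < d)%nat -> (u k - c k)^2 = 0).
    { apply sumR_zero. intros; apply pow2_ge_0. unfold dist in E.
      assert (0 <= sumR d (fun k => (u k - c k)^2)) by (apply sumR_nonneg; intros; apply pow2_ge_0).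
      apply sqrt_eq_0 in E; auto. }
    assert (Z' : forall k, (k < d)%nat -> u k = c k).
    { intros k Hk. specialize (Z k Hk). nra. }
    rewrite E. unfold dist.
    rewrite (sumR_ext d _ (fun k => (if Nat.eqb k 0 then r else 0)^2)) by (intros; ring).
    rewrite (sumR_ext d (fun k => (u k - _)^2) (fun k => (if Nat.eqb k 0 then r else 0)^2)).
    2:{ intros k Hk. rewrite Z' by auto. ring. }
    rewrite sumR_first by auto. rewrite sqrt_pow2 by auto. split; ring.
  - set (del := dist d u c) in *.
    assert (Hdel : 0 < del) by (pose proof (dnonneg d u c); fold del in H; lra).
    assert (Hsq : sumR d (fun k => (u k - c k)^2) = del^2).
    { unfold del, dist. rewrite pow2_sqrt; auto. apply sumR_nonneg; intros; apply pow2_ge_0. }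
    unfold dist. split.
    + rewrite (sumR_ext d _ (fun k => (r/del)^2 * (u k - c k)^2)).
      2:{ intros. field. lra. }
      rewrite sumR_scale, Hsq. apply sqrt_lem_1; try nra. field. lra.
    + rewrite (sumR_ext d _ (fun k => (1 + r/del)^2 * (u k - c k)^2)).
      2:{ intros. field. lra. }
      rewrite sumR_scale, Hsq. apply sqrt_lem_1.
      * apply Rmult_le_pos; [|nra]. apply pow2_ge_0.
      * lra.
      * field. lra.
Qed.

From Stdlib Require Import Reals Lra Lia ZArith List.
Open Scope R_scope.
Import ListNotations.
Import Defs.


Definition cell (e up p : R) (first : bool) : R :=
  if first then Rmax e p else Rmin up (Rmax e p).

Fixpoint Hcol (D : nat -> nat -> R) (j : nat) (up : nat -> R) (first : bool) (i : nat) : R :=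
  cell (D i j) (up i) (match i with O => 0 | S i' => Hcol D j up first i' end) first.

Fixpoint DPH (D : nat -> nat -> R) (j : nat) : nat -> R :=
  match j with
  | O => Hcol D 0 (fun _ => 0) true
  | S j' => Hcol D (S j') (DPH D j') false
  end.

Definition prv D j i := match i with O => 0 | S i' => DPH D j i' end.

Lemma H_0 D i : DPH D 0 i = Rmax (D i 0%nat) (prv D 0 i).
Proof. destruct i; reflexivity. Qed.
Lemma H_S D j i : DPH D (S j) i = Rmin (DPH D j i) (Rmax (D i (S j)) (prv D (S j) i)).
Proof. destruct i; reflexivity. Qed.

Lemma H_anti D j i : DPH D (S j) i <= DPH D j i.
Proof. rewrite H_S. rmm. Qed.

Lemma H_anti_gen D j1 j2 i : (j1 <= j2)%nat -> DPH D j2 i <= DPH D j1 i.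
Proof. induction 1. lra. pose proof (H_anti D m i). lra. Qed.

Lemma H_le_cell D j i : DPH D j i <= Rmax (D i j) (prv D j i).
Proof. destruct j. rewrite H_0; lra. rewrite H_S. rmm. Qed.


Lemma H_nonneg D (Dnn : forall a b, 0 <= D a b) j i : 0 <= DPH D j i.
Proof.
  revert i; induction j; intros i.
  - rewrite H_0. pose proof (Dnn i 0%nat). rmm.
  - rewrite H_S. pose proof (IHj i). pose proof (Dnn i (S j)). rmm.
Qed.

Lemma prv_nonneg D (Dnn : forall a b, 0 <= D a b) j i : 0 <= prv D j i.
Proof. destruct i; simpl; [lra| apply H_nonneg; auto]. Qed.

Lemma H_mono D D' j i : (forall a b, (a <= i)%nat -> (b <= j)%nat -> D a b <= D' a b) ->
  DPH D j i <= DPH D' j i.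
Proof.
  revert i; induction j; intros i; induction i; intros Hle.
  - rewrite !H_0. cbn [prv]. pose proof (Hle 0%nat 0%nat ltac:(lia) ltac:(lia)). rmm.
  - rewrite !H_0. cbn [prv]. pose proof (Hle (S i) 0%nat ltac:(lia) ltac:(lia)).
    pose proof (IHi ltac:(intros; apply Hle; lia)). rmm.
  - rewrite !H_S. cbn [prv]. pose proof (Hle 0%nat (S j) ltac:(lia) ltac:(lia)).
    pose proof (IHj 0%nat ltac:(intros; apply Hle; lia)). rmm.
  - rewrite !H_S. cbn [prv]. pose proof (Hle (S i) (S j) ltac:(lia) ltac:(lia)).
    pose proof (IHj (S i) ltac:(intros; apply Hle; lia)).
    pose proof (IHi ltac:(intros; apply Hle; lia)). rmm.
Qed.

Definition stepok (x y : nat * nat) : Prop :=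
  let (i, j) := x in let (i', j') := y in
  (i' = i + 1 /\ j' = j)%nat \/ (i' = i /\ j' = j + 1)%nat \/ (i' = i + 1 /\ j' = j + 1)%nat.

Definition costg (g : nat -> nat -> R) (p : list (nat * nat)) : R :=
  fold_right Rmax 0 (map (fun ij => g (fst ij) (snd ij)) p).

Lemma fold_Rmax_init l z : 0 <= z -> fold_right Rmax z l = Rmax (fold_right Rmax 0 l) z.
Proof. intros Hz; induction l; simpl. rmm. rewrite IHl. rmm. Qed.

Lemma fold_Rmax_nonneg l : 0 <= fold_right Rmax 0 l.
Proof. induction l; simpl. lra. rmm. Qed.

Lemma costg_snoc g p x : costg g (p ++ [x]) = Rmax (costg g p) (Rmax (g (fst x) (snd x)) 0).
Proof. unfold costg. rewrite map_app, fold_right_app. simpl. apply fold_Rmax_init. rmm. Qed.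

Lemma costg_le g p X : 0 <= X -> (forall x, In x p -> g (fst x) (snd x) <= X) -> costg g p <= X.
Proof. intros H0 H1. unfold costg. induction p; simpl. lra.
  pose proof (H1 a (or_introl eq_refl)). pose proof (IHp (fun x h => H1 x (or_intror h))). rmm. Qed.

Lemma costg_ge g p x : In x p -> g (fst x) (snd x) <= costg g p.
Proof. unfold costg. induction p; simpl; [tauto|]; intros [->|h]. rmm. pose proof (IHp h). rmm. Qed.

Lemma coupling_snoc_inv a b p x : p <> [] -> coupling (S a) (S b) (p ++ [x]) ->
  exists a' b', coupling (S a') (S b') p /\ stepok (a', b') x /\ x = (a, b).
Proof.
  intros Hp [H1 [H2 [H3 H4]]].
  rewrite length_app in *. simpl length in *.
  assert (Hl : (1 <= length p)%nat) by (destruct p; [congruence|simpl; lia]).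
  replace (length p + 1 - 1)%nat with (length p) in H3 by lia.
  rewrite app_nth2 in H3 by lia. rewrite Nat.sub_diag in H3. simpl in H3.
  destruct (nth (length p - 1) p (0%nat,0%nat)) as [a' b'] eqn:El.
  exists a', b'. split; [|split].
  - split; [auto|split;[|split]].
    + rewrite app_nth1 in H2 by lia. auto.
    + rewrite El. f_equal; lia.
    + intros t Ht. specialize (H4 t ltac:(lia)). rewrite !app_nth1 in H4 by lia. exact H4.
  - specialize (H4 (length p - 1)%nat ltac:(lia)).
    rewrite app_nth1 in H4 by lia. rewrite app_nth2 in H4 by lia.
    replace (length p - 1 + 1 - length p)%nat with 0%nat in H4 by lia. simpl in H4.
    rewrite El in H4. unfold stepok. destruct x. exact H4.
  - rewrite H3; f_equal; lia.
Qed.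

Lemma coupling_single a b x : coupling (S a) (S b) [x] -> x = (0%nat, 0%nat) /\ a = 0%nat /\ b = 0%nat.
Proof. intros [H1 [H2 [H3 H4]]]. simpl in *. subst. inversion H3. split; auto; lia. Qed.

Lemma coupling_snoc a b p a2 b2 : coupling (S a) (S b) p -> stepok (a, b) (a2, b2) ->
  coupling (S a2) (S b2) (p ++ [(a2, b2)]).
Proof.
  intros [H1 [H2 [H3 H4]]] Hs. unfold coupling. rewrite length_app. simpl length.
  split; [lia|split;[|split]].
  - rewrite app_nth1 by lia. auto.
  - replace (length p + 1 - 1)%nat with (length p) by lia.
    rewrite app_nth2 by lia. rewrite Nat.sub_diag. simpl. f_equal; lia.
  - intros t Ht. destruct (Nat.eq_dec (t + 1) (length p)).
    + rewrite app_nth1 by lia. rewrite app_nth2 by lia. rewrite e, Nat.sub_diag. simpl.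
      replace t with (length p - 1)%nat by lia. rewrite H3.
      replace (S a - 1)%nat with a by lia. replace (S b - 1)%nat with b by lia. exact Hs.
    + rewrite !app_nth1 by lia. apply H4; lia.
Qed.

Lemma coupling_nonnil n m p : coupling n m p -> p <> [].
Proof. intros [H _] ->. simpl in H. lia. Qed.

Lemma path_ind (P : list (nat*nat) -> nat -> nat -> Prop) :
  P [(0%nat,0%nat)] 0%nat 0%nat ->
  (forall p a b a2 b2, coupling (S a) (S b) p -> P p a b -> stepok (a, b) (a2, b2) ->
     P (p ++ [(a2, b2)]) a2 b2) ->
  forall p a b, coupling (S a) (S b) p -> P p a b.
Proof.
  intros H0 HS p. induction p using rev_ind; intros a b Hc.
  - apply coupling_nonnil in Hc. congruence.
  - assert (Hn : p = [] \/ p <> []) by (destruct p; [left|right]; congruence). destruct Hn as [->|Hn].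
    + simpl in Hc. destruct (coupling_single a b x Hc) as [-> [-> ->]]. exact H0.
    + destruct (coupling_snoc_inv a b p x Hn Hc) as [a' [b' [Hc' [Hs ->]]]].
      eapply HS; eauto.
Qed.



Lemma lower D (Dnn : forall a b, 0 <= D a b) (s : nat -> nat) :
  forall p a t, coupling (S a) (S t) p -> forall j,
  (forall t', (t' < t)%nat -> (s t' < s (S t'))%nat) -> (s t <= j)%nat ->
  DPH D j a <= costg (fun x y => D x (s y)) p.
Proof.
  intros p a t Hc.
  apply (path_ind (fun p a t => forall j,
    (forall t', (t' < t)%nat -> (s t' < s (S t'))%nat) -> (s t <= j)%nat ->
    DPH D j a <= costg (fun x y => D x (s y)) p)); [| |exact Hc]; clear p a t Hc.
  - intros j Hs Hj. unfold costg. simpl.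
    pose proof (H_anti_gen D (s 0%nat) j 0 Hj). pose proof (H_le_cell D (s 0%nat) 0).
    cbn [prv] in *. rmm.
  - intros p a b a2 b2 Hc IH Hst j Hs Hj. rewrite costg_snoc. simpl fst; simpl snd.
    pose proof (costg_ge (fun x y => D x (s y)) p) as _.
    destruct Hst as [[-> ->]|[[-> ->]|[-> ->]]]; rewrite ?Nat.add_1_r in *.
    + specialize (IH (s b) ltac:(intros; apply Hs; lia) ltac:(lia)).
      pose proof (H_anti_gen D (s b) j (S a) Hj). pose proof (H_le_cell D (s b) (S a)).
      cbn [prv] in *. pose proof (Dnn (S a) (s b)). rmm.
    + assert (s b < s (S b))%nat by (apply Hs; lia).
      specialize (IH (s b) ltac:(intros; apply Hs; lia) ltac:(lia)).
      pose proof (H_anti_gen D (s b) j a ltac:(lia)). pose proof (Dnn a (s (S b))). rmm.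
    + assert (s b < s (S b))%nat by (apply Hs; lia).
      specialize (IH (s b) ltac:(intros; apply Hs; lia) ltac:(lia)).
      pose proof (H_anti_gen D (s (S b)) j (S a) Hj). pose proof (H_le_cell D (s (S b)) (S a)).
      pose proof (H_anti_gen D (s b) (s (S b)) a ltac:(lia)).
      cbn [prv] in *. pose proof (Dnn (S a) (s (S b))). rmm.
Qed.

Definition Plan D j i X := exists k s p, (1 <= k)%nat /\
  (forall t, (t + 1 < k)%nat -> (s t < s (t+1))%nat) /\
  (forall t, (t < k)%nat -> (s t <= j)%nat) /\ coupling (S i) k p /\
  (forall x, In x p -> (snd x < k)%nat) /\ (forall x, In x p -> D (fst x) (s (snd x)) <= X).

Lemma Plan_mono D j i X Y : X <= Y -> Plan D j i X -> Plan D j i Y.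
Proof. intros HXY (k & s & p & H1 & H2 & H3 & H4 & H5 & H6).
  exists k, s, p. do 5 (split; [assumption|]). intros x Hx; specialize (H6 x Hx); lra. Qed.

Lemma Plan_lift D j i X : Plan D j i X -> Plan D (S j) i X.
Proof. intros (k & s & p & H1 & H2 & H3 & H4 & H5 & H6).
  exists k, s, p. do 2 (split; [assumption|]). split; [intros t Ht; specialize (H3 t Ht); lia|]. auto. Qed.

Lemma Plan_base D j : Plan D j 0 (Rmax (D 0%nat j) 0).
Proof.
  exists 1%nat, (fun _ => j), [(0%nat,0%nat)]. split; [lia|]. split; [intros; lia|].
  split; [intros; lia|]. split.
  { unfold coupling; simpl. split; [lia|]. split; [auto|]. split; [auto|]. intros; lia. }
  split.
  - intros x [<-|[]]; simpl; lia.
  - intros x [<-|[]]; simpl; rmm.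
Qed.

Lemma Plan_ext D j i X : Plan D j i X -> Plan D j (S i) (Rmax (D (S i) j) X).
Proof.
  intros (k & s & p & H1 & H2 & H3 & H4 & H5 & H6).
  replace k with (S (k-1)) in H4 by lia.
  destruct (Nat.eq_dec (s (k-1)%nat) j) as [Ej|Nj].
  - exists k, s, (p ++ [(S i, (k-1)%nat)]). do 3 (split; [assumption|]). split.
    + assert (Ek : k = S (k-1)) by lia. rewrite Ek at 1. eapply coupling_snoc; [exact H4|].
      left; split; lia.
    + split.
    intros x Hx. apply in_app_or in Hx. destruct Hx as [Hx|[<-|[]]]; auto. simpl; lia.
    intros x Hx. apply in_app_or in Hx. destruct Hx as [Hx|[<-|[]]].
      * specialize (H6 x Hx). rmm.
      * simpl. rewrite Ej. rmm.
  - assert (Hlt : (s (k-1) < j)%nat) by (pose proof (H3 (k-1)%nat ltac:(lia)); lia).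
    exists (S k), (fun t => if Nat.ltb t k then s t else j), (p ++ [(S i, k)]).
    split; [lia|]. split; [|split; [|split; [|split]]].
    + intros t Ht. destruct (Nat.ltb_spec t k); destruct (Nat.ltb_spec (t+1) k); try lia.
      * apply H2; lia.
      * replace t with (k-1)%nat by lia. auto.
    + intros t Ht. destruct (Nat.ltb_spec t k); [apply H3; auto | lia].
    + eapply coupling_snoc; [exact H4|]. right; right; split; lia.
    + intros x Hx. apply in_app_or in Hx. destruct Hx as [Hx|[<-|[]]]; simpl; auto.
      specialize (H5 x Hx); lia.
    + intros x Hx. apply in_app_or in Hx. destruct Hx as [Hx|[<-|[]]].
      * specialize (H5 x Hx). destruct (Nat.ltb_spec (snd x) k); try lia.
        specialize (H6 x Hx). rmm.
      * simpl. rewrite Nat.ltb_irrefl. rmm.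
Qed.

Lemma Plan_all D j i : Plan D j i (DPH D j i).
Proof.
  revert i; induction j; intros i; induction i.
  - rewrite H_0. cbn [prv]. apply Plan_base.
  - rewrite H_0. cbn [prv]. apply Plan_ext; auto.
  - rewrite H_S. cbn [prv]. unfold Rmin. destruct Rle_dec.
    + apply Plan_lift; auto.
    + apply Plan_base.
  - rewrite H_S. cbn [prv]. unfold Rmin. destruct Rle_dec.
    + apply Plan_lift; auto.
    + apply Plan_ext. auto.
Qed.



Lemma lower_gen D (Dnn : forall a b, 0 <= D a b) n m k s p :
  (1 <= n)%nat -> subseq_idx k m s -> coupling n k p ->
  DPH D (m-1) (n-1) <= costg (fun x y => D x (s y)) p.
Proof.
  intros Hn (Hk & Hb & Hi) Hc.
  assert (Hc' : coupling (S (n-1)) (S (k-1)) p) by (replace (S (n-1)) with n by lia; replace (S (k-1)) with k by lia; auto).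
  apply (lower D Dnn s p (n-1) (k-1) Hc' (m-1)).
  - intros t Ht. specialize (Hi t ltac:(lia)). rewrite Nat.add_1_r in Hi. auto.
  - specialize (Hb (k-1)%nat ltac:(lia)). lia.
Qed.

Lemma frechet_c_val d n m A B : (1 <= n)%nat -> (1 <= m)%nat ->
  frechet_c d n m A B (DPH (fun a b => dist d (A a) (B b)) (m-1) (n-1)).
Proof.
  intros Hn Hm. set (D := fun a b => dist d (A a) (B b)).
  assert (Dnn : forall a b, 0 <= D a b) by (intros; apply dnonneg).
  split.
  - destruct (Plan_all D (m-1) (n-1)) as (k & s & p & H1 & H2 & H3 & H4 & H5 & H6).
    assert (Hsub : subseq_idx k m s).
    { split; [auto|split; [|auto]]. intros t Ht. specialize (H3 t Ht). lia. }
    exists k, s. split; [auto|]. split.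
    + exists p. assert (Hc : coupling n k p) by (replace n with (S (n-1)) by lia; auto).
      split; [auto|]. change (coupling_cost d A (fun t => B (s t)) p) with (costg (fun x y => D x (s y)) p). apply Rle_antisym.
      * apply costg_le. apply H_nonneg; auto. exact H6.
      * apply (lower_gen D Dnn n m k s p Hn Hsub Hc).
    + intros p' Hc'. change (coupling_cost d A (fun t => B (s t)) p') with (costg (fun x y => D x (s y)) p'). apply (lower_gen D Dnn n m k s p' Hn Hsub Hc').
  - intros k s v Hsub [[p [Hc Hcost]] _]. rewrite <- Hcost.
    change (coupling_cost d A (fun t => B (s t)) p) with (costg (fun x y => D x (s y)) p). apply (lower_gen D Dnn n m k s p Hn Hsub Hc).
Qed.

Lemma frechet_c_le d n m A B v : (1 <= n)%nat -> (1 <= m)%nat ->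
  frechet_c d n m A B v -> v <= DPH (fun a b => dist d (A a) (B b)) (m-1) (n-1).
Proof.
  intros Hn Hm [_ Hv]. destruct (frechet_c_val d n m A B Hn Hm) as [[k [s [Hs Hf]]] _].
  eapply Hv; eauto.
Qed.

Lemma visit a b p : coupling (S a) (S b) p -> forall l, (l <= a)%nat -> exists t, (t <= b)%nat /\ In (l, t) p.
Proof.
  intros Hc. apply (path_ind (fun p a b => forall l, (l <= a)%nat -> exists t, (t <= b)%nat /\ In (l, t) p)); [| |exact Hc]; clear.
  - intros l Hl. exists 0%nat. split; [lia|]. left. f_equal. lia.
  - intros p a b a2 b2 Hc IH Hs l Hl.
    assert (Hab : (a <= a2 /\ b <= b2 /\ a2 <= a + 1)%nat) by (destruct Hs as [[-> ->]|[[-> ->]|[-> ->]]]; lia).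
    destruct (Nat.le_gt_cases l a) as [Hla|Hla].
    + destruct (IH l Hla) as [t [Ht Hin]]. exists t. split; [lia|]. apply in_or_app; auto.
    + exists b2. split; [lia|]. apply in_or_app; right; left. f_equal. lia.
Qed.

Lemma chain (s : nat -> nat) t : (forall t', (t' < t)%nat -> (s t' < s (S t'))%nat) ->
  forall t1 t2, (t1 < t2)%nat -> (t2 <= t)%nat -> (s t1 < s t2)%nat.
Proof.
  intros Hs t1 t2 H12. induction H12; intros Ht.
  - apply Hs; lia.
  - specialize (IHle ltac:(lia)). specialize (Hs m ltac:(lia)). lia.
Qed.

Lemma H_pos D j i : (forall a b, (b <= j)%nat -> 0 < D a b) -> 0 < DPH D j i.
Proof.
  revert i; induction j; intros i Hp.
  - rewrite H_0. pose proof (Hp i 0%nat ltac:(lia)). rmm.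
  - rewrite H_S. pose proof (IHj i ltac:(intros; apply Hp; lia)). pose proof (Hp i (S j) ltac:(lia)). rmm.
Qed.

Section Adv.
Variables (d n m : nat) (U C : nat -> nat -> R) (r : nat -> R).
Hypotheses (Hd : (1 <= d)%nat) (Hn : (1 <= n)%nat) (Hm : (1 <= m)%nat)
  (Hr : forall j, (j < m)%nat -> 0 < r j).

Let E := fun a b => dist d (U a) (C b) + r b.
Let v := DPH E (m-1) (n-1).

Fixpoint nxt (j fuel p : nat) : nat :=
  match fuel with O => p | S f => if Rle_dec v (E p j) then p else nxt j f (S p) end.

Lemma nxt_spec j f : forall p, (p <= nxt j f p <= p + f)%nat /\
  (forall i, (p <= i < nxt j f p)%nat -> E i j < v) /\
  ((nxt j f p < p + f)%nat -> v <= E (nxt j f p) j).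
Proof.
  induction f; intros p; simpl.
  - split; [lia|]. split; [intros; lia|]. intros; lia.
  - destruct Rle_dec as [Hle|Hlt].
    + split; [lia|]. split; [intros; lia|]. auto.
    + destruct (IHf (S p)) as [H1 [H2 H3]]. split; [lia|]. split.
      * intros i Hi. destruct (Nat.eq_dec i p) as [->|]. lra. apply H2; lia.
      * intros Hl. apply H3. lia.
Qed.

Fixpoint prog (j : nat) : nat := match j with O => O | S j' => nxt j' (n - prog j') (prog j') end.

Lemma prog_le j : (prog j <= n)%nat.
Proof. induction j; simpl; [lia|]. destruct (nxt_spec j (n - prog j) (prog j)) as [H1 _]. lia. Qed.

Lemma prog_step j : (prog j <= prog (S j))%nat.
Proof. simpl. destruct (nxt_spec j (n - prog j) (prog j)) as [H1 _]. lia. Qed.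

Lemma prog_mono j1 j2 : (j1 <= j2)%nat -> (prog j1 <= prog j2)%nat.
Proof. induction 1; auto. pose proof (prog_step m0). lia. Qed.

Lemma v_pos : 0 < v.
Proof. unfold v. apply H_pos. intros a b Hb. unfold E. pose proof (dnonneg d (U a) (C b)).
  pose proof (Hr b ltac:(lia)). lra. Qed.

Lemma dp_below j : forall i, (i < prog (S j))%nat -> DPH E j i < v.
Proof.
  pose proof v_pos as Hv.
  induction j; intros i; induction i; intros Hi.
  - destruct (nxt_spec 0 (n - prog 0) (prog 0)) as [_ [H2 _]]. simpl prog in *.
    rewrite H_0; cbn [prv]. assert (E 0%nat 0%nat < v) by (apply H2; lia). rmm.
  - destruct (nxt_spec 0 (n - prog 0) (prog 0)) as [_ [H2 _]]. simpl prog in *.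
    rewrite H_0; cbn [prv]. assert (E (S i) 0%nat < v) by (apply H2; lia).
    specialize (IHi ltac:(lia)). rmm.
  - rewrite H_S; cbn [prv]. destruct (Nat.lt_ge_cases 0 (prog (S j))).
    + specialize (IHj 0%nat H). rmm.
    + destruct (nxt_spec (S j) (n - prog (S j)) (prog (S j))) as [_ [H2' _]].
      assert (E 0%nat (S j) < v) by (apply H2'; change (prog (S (S j))) with (nxt (S j) (n - prog (S j)) (prog (S j))) in Hi; lia). rmm.
  - rewrite H_S; cbn [prv]. specialize (IHi ltac:(lia)). destruct (Nat.lt_ge_cases (S i) (prog (S j))).
    + specialize (IHj (S i) H). rmm.
    + destruct (nxt_spec (S j) (n - prog (S j)) (prog (S j))) as [_ [H2' _]].
      assert (E (S i) (S j) < v) by (apply H2'; change (prog (S (S j))) with (nxt (S j) (n - prog (S j)) (prog (S j))) in Hi; lia). rmm.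
Qed.

Lemma prog_lt : (prog m < n)%nat.
Proof.
  destruct (Nat.lt_ge_cases (prog m) n); auto. exfalso.
  pose proof (dp_below (m-1) (n-1)). replace (S (m-1)) with m in H0 by lia.
  specialize (H0 ltac:(lia)). unfold v in H0. lra.
Qed.

Definition Bs (j : nat) : nat -> R := far d (C j) (r j) (U (prog (S j))).
Let Ds := fun a b => dist d (U a) (Bs b).

Lemma Bs_real : realization d m C r Bs.
Proof. intros j Hj. unfold Bs. destruct (far_props d (C j) (r j) (U (prog (S j))) Hd) as [-> _].
  pose proof (Hr j Hj); lra. pose proof (Hr j Hj); lra. Qed.

Lemma adv_far j : (j < m)%nat -> v <= Ds (prog (S j)) j.
Proof.
  intros Hj. unfold Ds, Bs. assert (Hrj : 0 <= r j) by (pose proof (Hr j Hj); lra).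
  destruct (far_props d (C j) (r j) (U (prog (S j))) Hd Hrj) as [_ ->].
  destruct (nxt_spec j (n - prog j) (prog j)) as [H1 [_ H3]].
  pose proof (prog_mono (S j) m ltac:(lia)). pose proof prog_lt. pose proof (prog_le j).
  apply H3. simpl prog in *. lia.
Qed.

Lemma adv_path (s : nat -> nat) : forall p a t, coupling (S a) (S t) p ->
  (forall t', (t' < t)%nat -> (s t' < s (S t'))%nat) -> (forall t', (t' <= t)%nat -> (s t' < m)%nat) ->
  (forall x, In x p -> Ds (fst x) (s (snd x)) < v) ->
  forall x, In x p -> (fst x < prog (S (s (snd x))))%nat.
Proof.
  intros p a t Hc.
  refine (path_ind (fun p a t =>
    (forall t', (t' < t)%nat -> (s t' < s (S t'))%nat) -> (forall t', (t' <= t)%nat -> (s t' < m)%nat) ->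
    (forall x, In x p -> Ds (fst x) (s (snd x)) < v) ->
    forall x, In x p -> (fst x < prog (S (s (snd x))))%nat) ?[base] ?[stp] p a t Hc); clear p a t Hc.
  - intros Hs Hm' Hall x [<-|[]]. simpl.
    destruct (Nat.lt_ge_cases 0 (prog (S (s 0%nat)))); auto. exfalso.
    pose proof (adv_far (s 0%nat) (Hm' 0%nat ltac:(lia))).
    pose proof (Hall (0%nat,0%nat) (or_introl eq_refl)). simpl in H1.
    replace (prog (S (s 0%nat))) with 0%nat in H0 by lia. lra.
  - intros p a b a2 b2 Hc IH Hst Hs Hm' Hall x Hx.
    assert (a <= a2 /\ b <= b2)%nat by (destruct Hst as [[-> ->]|[[-> ->]|[-> ->]]]; lia).
    assert (IH' := IH ltac:(intros; apply Hs; lia) ltac:(intros; apply Hm'; lia)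
      ltac:(intros y Hy; apply Hall; apply in_or_app; auto)).
    apply in_app_or in Hx. destruct Hx as [Hx|[<-|[]]]; [apply IH'; auto|]. simpl.
    destruct (Nat.lt_ge_cases a2 (prog (S (s b2)))) as [|Hge]; auto. exfalso.
    set (l := prog (S (s b2))) in *.
    assert (Hc2 : coupling (S a2) (S b2) (p ++ [(a2, b2)])) by (eapply coupling_snoc; eauto).
    destruct (visit a2 b2 _ Hc2 l Hge) as [t'' [Ht'' Hin]].
    destruct (Nat.eq_dec t'' b2) as [->|Hne].
    + pose proof (Hall _ Hin). cbn [fst snd] in H0. pose proof (adv_far (s b2) (Hm' b2 ltac:(lia))). fold l in H1. lra.
    + apply in_app_or in Hin. destruct Hin as [Hin|[Heq|[]]]; [|inversion Heq; lia].
      pose proof (IH' _ Hin). cbn [fst snd] in H0.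
      pose proof (chain s b2 Hs t'' b2 ltac:(lia) ltac:(lia)).
      pose proof (prog_mono (S (s t'')) (s b2) ltac:(lia)). pose proof (prog_step (s b2)).
      fold l in H3. lia.
Qed.

Lemma Ds_le_E a b : (b < m)%nat -> Ds a b <= E a b.
Proof.
  intros Hb. unfold Ds, E. pose proof (dtri d (U a) (C b) (Bs b)).
  rewrite (dsym d (C b) (Bs b)) in H. pose proof (Bs_real b Hb). lra.
Qed.

Lemma adv_value : DPH Ds (m-1) (n-1) = v.
Proof.
  apply Rle_antisym.
  - apply H_mono. intros a b _ Hb. apply Ds_le_E. lia.
  - destruct (Rle_dec v (DPH Ds (m-1) (n-1))) as [|Hlt]; auto. exfalso.
    destruct (Plan_all Ds (m-1) (n-1)) as (k & s & p & H1 & H2 & H3 & H4 & H5 & H6).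
    assert (Hc : coupling (S (n-1)) (S (k-1)) p) by (replace (S (k-1)) with k by lia; auto).
    assert (Hin : In ((n-1)%nat, (k-1)%nat) p).
    { destruct Hc as [_ [_ [Hl _]]].
      replace (S (n-1) - 1)%nat with (n-1)%nat in Hl by lia.
      replace (S (k-1) - 1)%nat with (k-1)%nat in Hl by lia. rewrite <- Hl. apply nth_In.
      destruct p; simpl in *; [|lia]. destruct (coupling_nonnil _ _ _ H4); auto. }
    pose proof (adv_path s p (n-1) (k-1) Hc
      ltac:(intros t Ht; specialize (H2 t ltac:(lia)); rewrite Nat.add_1_r in H2; auto)
      ltac:(intros t Ht; specialize (H3 t ltac:(lia)); lia)
      ltac:(intros x Hx; specialize (H6 x Hx); lra) _ Hin) as Hp.
    cbn [fst snd] in Hp. pose proof (H3 (k-1)%nat ltac:(lia)).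
    pose proof (prog_mono (S (s (k-1)%nat)) m ltac:(lia)). pose proof prog_lt. lia.
Qed.

Theorem math_main : frechet_max1 d n m U C r v.
Proof.
  split.
  - exists Bs. split; [apply Bs_real|]. rewrite <- adv_value. apply frechet_c_val; auto.
  - intros B v' HB Hf. pose proof (frechet_c_le d n m U B v' Hn Hm Hf).
    eapply Rle_trans; [exact H|]. apply H_mono. intros a b _ Hb.
    pose proof (dtri d (U a) (C b) (B b)). rewrite (dsym d (C b) (B b)) in H0.
    pose proof (HB b ltac:(lia)). unfold E. lra.
Qed.

End Adv.

From Stdlib Require Import Reals Lra Lia ZArith List.
Open Scope R_scope.
Import ListNotations.
Import Defs.

Definition P0 : list instr := [
  (*0*) IConst 3 1%Z; (*1*) IMul 4 0 2; (*2*) IMul 15 1 2; (*3*) IAdd 4 4 15;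
  (*4*) IAdd 4 4 1; (*5*) IConst 15 8%Z; (*6*) IAdd 5 4 15; (*7*) IConst 6 0%Z;
  (*8*) JmpILt 6 4 10; (*9*) Jmp 15; (*10*) RLoad 0 6; (*11*) IAdd 7 5 6;
  (*12*) RStore 7 0; (*13*) IAdd 6 6 3; (*14*) Jmp 8;
  (*15*) IAdd 14 5 4; (*16*) IConst 16 0%Z; (*17*) RofI 6 16; (*18*) IConst 8 0%Z;
  (*19*) JmpILt 8 1 21; (*20*) Jmp 67;
  (*21*) IMul 12 8 2; (*22*) IAdd 12 12 5; (*23*) IMul 15 0 2; (*24*) IAdd 12 12 15;
  (*25*) IMul 13 1 2; (*26*) IAdd 13 13 15; (*27*) IAdd 13 13 5; (*28*) IAdd 13 13 8;
  (*29*) RofI 4 16; (*30*) IConst 9 0%Z;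
  (*31*) JmpILt 9 0 33; (*32*) Jmp 65;
  (*33*) IMul 11 9 2; (*34*) IAdd 11 11 5; (*35*) RofI 1 16; (*36*) IConst 10 0%Z;
  (*37*) JmpILt 10 2 39; (*38*) Jmp 48;
  (*39*) IAdd 7 11 10; (*40*) RLoad 2 7; (*41*) IAdd 7 12 10; (*42*) RLoad 3 7;
  (*43*) RSub 2 2 3; (*44*) RMul 2 2 2; (*45*) RAdd 1 1 2; (*46*) IAdd 10 10 3; (*47*) Jmp 37;
  (*48*) RSqrt 5 1; (*49*) RLoad 2 13; (*50*) RAdd 5 5 2; (*51*) JmpRLt 5 4 53;
  (*52*) Jmp 54; (*53*) RAdd 5 4 6; (*54*) IAdd 7 14 9; (*55*) JmpILt 16 8 57;
  (*56*) Jmp 61; (*57*) RLoad 2 7; (*58*) JmpRLt 2 5 60; (*59*) Jmp 61;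
  (*60*) RAdd 5 2 6; (*61*) RStore 7 5; (*62*) RAdd 4 5 6; (*63*) IAdd 9 9 3; (*64*) Jmp 31;
  (*65*) IAdd 8 8 3; (*66*) Jmp 19;
  (*67*) IAdd 7 14 0; (*68*) ISub 7 7 3; (*69*) RLoad 0 7; (*70*) Halt ].

Definition reach (Sp : nat) (s : state) (T : nat) (Q : state -> Prop) : Prop :=
  exists t s', (t <= T)%nat /\ exec P0 Sp t s s' /\ Q s'.

Lemma reach_done Sp s T (Q : state -> Prop) : Q s -> reach Sp s T Q.
Proof. intros; exists 0%nat, s; split; [lia|split; [constructor|auto]]. Qed.

Lemma reach_step Sp s s1 T Q : (forall a, In a (accessed P0 s) -> (a < Sp)%nat) -> step P0 s s1 ->
  reach Sp s1 T Q -> reach Sp s (S T) Q.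
Proof. intros Ha Hs (t & s' & Ht & He & HQ). exists (S t), s'. split; [lia|split; auto]. econstructor; eauto. Qed.

Lemma exec_trans Sp t1 t2 s s1 s2 : exec P0 Sp t1 s s1 -> exec P0 Sp t2 s1 s2 -> exec P0 Sp (t1 + t2) s s2.
Proof. induction 1; intros; simpl; auto. econstructor; eauto. Qed.

Lemma reach_trans Sp s T1 T2 (Q1 Q : state -> Prop) : reach Sp s T1 Q1 ->
  (forall s1, Q1 s1 -> reach Sp s1 T2 Q) -> reach Sp s (T1 + T2) Q.
Proof. intros (t1 & s1 & H1 & E1 & Q1s) HH. destruct (HH s1 Q1s) as (t2 & s2 & H2 & E2 & Qs).
  exists (t1 + t2)%nat, s2. split; [lia|split; auto]. eapply exec_trans; eauto. Qed.

Lemma reach_mono Sp s T1 T2 Q : (T1 <= T2)%nat -> reach Sp s T1 Q -> reach Sp s T2 Q.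
Proof. intros H (t & s' & Ht & E & HQ). exists t, s'; split; [lia|auto]. Qed.

Lemma reach_impl Sp s T (Q1 Q2 : state -> Prop) : (forall s, Q1 s -> Q2 s) -> reach Sp s T Q1 -> reach Sp s T Q2.
Proof. intros H (t & s' & Ht & E & HQ). exists t, s'; auto. Qed.

Lemma reach_loop Sp (Inv : nat -> state -> Prop) N Tb :
  (forall k s, (k < N)%nat -> Inv k s -> reach Sp s Tb (Inv (S k))) ->
  forall s, Inv 0%nat s -> reach Sp s (N * Tb) (Inv N).
Proof.
  intros Hb. assert (forall r k s, (k + r = N)%nat -> Inv k s -> reach Sp s (r * Tb) (Inv N)).
  { induction r; intros k s Hk Hs.
    - simpl. replace N with k by lia. apply reach_done; auto.
    - simpl. apply reach_trans with (Q1 := Inv (S k)). apply Hb; auto; lia.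
      intros s1 H1. apply (IHr (S k)); auto. lia. }
  intros s Hs. apply (H N 0%nat); auto.
Qed.

Section Steps.
Variables (Sp q T : nat) (I : nat -> Z) (Rm : nat -> R) (Q : state -> Prop).

Ltac stp H := eapply reach_step; [ | unfold step; simpl pc; simpl imem; simpl rmem; rewrite H; reflexivity | eassumption ];
  unfold accessed; simpl pc; rewrite H; simpl; intros a Ha; repeat destruct Ha as [<-|Ha]; auto; contradiction.

Lemma rs_IConst i z : nth q P0 Halt = IConst i z -> (i < Sp)%nat ->
  reach Sp (mkState (S q) (updI I i z) Rm) T Q -> reach Sp (mkState q I Rm) (S T) Q.
Proof. intros H ? ?. stp H. Qed.
Lemma rs_IAdd i j k : nth q P0 Halt = IAdd i j k -> (i < Sp)%nat -> (j < Sp)%nat -> (k < Sp)%nat ->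
  reach Sp (mkState (S q) (updI I i (I j + I k)%Z) Rm) T Q -> reach Sp (mkState q I Rm) (S T) Q.
Proof. intros H ? ? ? ?. stp H. Qed.
Lemma rs_ISub i j k : nth q P0 Halt = ISub i j k -> (i < Sp)%nat -> (j < Sp)%nat -> (k < Sp)%nat ->
  reach Sp (mkState (S q) (updI I i (I j - I k)%Z) Rm) T Q -> reach Sp (mkState q I Rm) (S T) Q.
Proof. intros H ? ? ? ?. stp H. Qed.
Lemma rs_IMul i j k : nth q P0 Halt = IMul i j k -> (i < Sp)%nat -> (j < Sp)%nat -> (k < Sp)%nat ->
  reach Sp (mkState (S q) (updI I i (I j * I k)%Z) Rm) T Q -> reach Sp (mkState q I Rm) (S T) Q.
Proof. intros H ? ? ? ?. stp H. Qed.
Lemma rs_RofI i j : nth q P0 Halt = RofI i j -> (i < Sp)%nat -> (j < Sp)%nat ->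
  reach Sp (mkState (S q) I (updR Rm i (IZR (I j)))) T Q -> reach Sp (mkState q I Rm) (S T) Q.
Proof. intros H ? ? ?. stp H. Qed.
Lemma rs_RAdd i j k : nth q P0 Halt = RAdd i j k -> (i < Sp)%nat -> (j < Sp)%nat -> (k < Sp)%nat ->
  reach Sp (mkState (S q) I (updR Rm i (Rm j + Rm k))) T Q -> reach Sp (mkState q I Rm) (S T) Q.
Proof. intros H ? ? ? ?. stp H. Qed.
Lemma rs_RSub i j k : nth q P0 Halt = RSub i j k -> (i < Sp)%nat -> (j < Sp)%nat -> (k < Sp)%nat ->
  reach Sp (mkState (S q) I (updR Rm i (Rm j - Rm k))) T Q -> reach Sp (mkState q I Rm) (S T) Q.
Proof. intros H ? ? ? ?. stp H. Qed.
Lemma rs_RMul i j k : nth q P0 Halt = RMul i j k -> (i < Sp)%nat -> (j < Sp)%nat -> (k < Sp)%nat ->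
  reach Sp (mkState (S q) I (updR Rm i (Rm j * Rm k))) T Q -> reach Sp (mkState q I Rm) (S T) Q.
Proof. intros H ? ? ? ?. stp H. Qed.
Lemma rs_RSqrt i j : nth q P0 Halt = RSqrt i j -> (i < Sp)%nat -> (j < Sp)%nat ->
  reach Sp (mkState (S q) I (updR Rm i (sqrt (Rm j)))) T Q -> reach Sp (mkState q I Rm) (S T) Q.
Proof. intros H ? ? ?. stp H. Qed.
Lemma rs_RLoad i j : nth q P0 Halt = RLoad i j -> (i < Sp)%nat -> (j < Sp)%nat -> (addr (I j) < Sp)%nat ->
  reach Sp (mkState (S q) I (updR Rm i (Rm (addr (I j))))) T Q -> reach Sp (mkState q I Rm) (S T) Q.
Proof. intros H ? ? ? ?. stp H. Qed.
Lemma rs_RStore i j : nth q P0 Halt = RStore i j -> (i < Sp)%nat -> (j < Sp)%nat -> (addr (I i) < Sp)%nat ->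
  reach Sp (mkState (S q) I (updR Rm (addr (I i)) (Rm j))) T Q -> reach Sp (mkState q I Rm) (S T) Q.
Proof. intros H ? ? ? ?. stp H. Qed.
Lemma rs_Jmp t : nth q P0 Halt = Jmp t ->
  reach Sp (mkState t I Rm) T Q -> reach Sp (mkState q I Rm) (S T) Q.
Proof. intros H ?. eapply reach_step; [ | unfold step; simpl pc; rewrite H; reflexivity | eassumption ].
  unfold accessed; simpl pc; rewrite H; simpl; contradiction. Qed.
Lemma rs_JmpILt_T i j t : nth q P0 Halt = JmpILt i j t -> (i < Sp)%nat -> (j < Sp)%nat -> (I i < I j)%Z ->
  reach Sp (mkState t I Rm) T Q -> reach Sp (mkState q I Rm) (S T) Q.
Proof. intros H ? ? Hlt ?. eapply reach_step; [ | unfold step; simpl pc; simpl imem; rewrite H; rewrite (proj2 (Z.ltb_lt _ _) Hlt); reflexivity | eassumption ].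
  unfold accessed; simpl pc; rewrite H; simpl; intros a Ha; repeat destruct Ha as [<-|Ha]; auto; contradiction. Qed.
Lemma rs_JmpILt_F i j t : nth q P0 Halt = JmpILt i j t -> (i < Sp)%nat -> (j < Sp)%nat -> (I j <= I i)%Z ->
  reach Sp (mkState (S q) I Rm) T Q -> reach Sp (mkState q I Rm) (S T) Q.
Proof. intros H ? ? Hlt ?. eapply reach_step; [ | unfold step; simpl pc; simpl imem; rewrite H; rewrite (proj2 (Z.ltb_ge _ _) Hlt); reflexivity | eassumption ].
  unfold accessed; simpl pc; rewrite H; simpl; intros a Ha; repeat destruct Ha as [<-|Ha]; auto; contradiction. Qed.
Lemma rs_JmpRLt_T i j t : nth q P0 Halt = JmpRLt i j t -> (i < Sp)%nat -> (j < Sp)%nat -> Rm i < Rm j ->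
  reach Sp (mkState t I Rm) T Q -> reach Sp (mkState q I Rm) (S T) Q.
Proof. intros H ? ? Hlt ?. eapply reach_step; [ | unfold step; simpl pc; simpl rmem; rewrite H; left; split; [exact Hlt|reflexivity] | eassumption ].
  unfold accessed; simpl pc; rewrite H; simpl; intros a Ha; repeat destruct Ha as [<-|Ha]; auto; contradiction. Qed.
Lemma rs_JmpRLt_F i j t : nth q P0 Halt = JmpRLt i j t -> (i < Sp)%nat -> (j < Sp)%nat -> Rm j <= Rm i ->
  reach Sp (mkState (S q) I Rm) T Q -> reach Sp (mkState q I Rm) (S T) Q.
Proof. intros H ? ? Hlt ?. eapply reach_step; [ | unfold step; simpl pc; simpl rmem; rewrite H; right; split; [exact Hlt|reflexivity] | eassumption ].
  unfold accessed; simpl pc; rewrite H; simpl; intros a Ha; repeat destruct Ha as [<-|Ha]; auto; contradiction. Qed.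
End Steps.


Lemma updI_eq f a z : updI f a z a = z.
Proof. unfold updI. rewrite Nat.eqb_refl. auto. Qed.
Lemma updI_neq f a z b : b <> a -> updI f a z b = f b.
Proof. unfold updI. intros H. apply Nat.eqb_neq in H. rewrite H. auto. Qed.
Lemma updR_eq f a z : updR f a z a = z.
Proof. unfold updR. rewrite Nat.eqb_refl. auto. Qed.
Lemma updR_neq f a z b : b <> a -> updR f a z b = f b.
Proof. unfold updR. intros H. apply Nat.eqb_neq in H. rewrite H. auto. Qed.
Lemma addr_of x : addr (Z.of_nat x) = x.
Proof. unfold addr. apply Nat2Z.id. Qed.

Ltac simpI := repeat match goal with |- context [updI ?f ?a ?z ?b] =>
  first [rewrite (updI_eq f a z) | rewrite (updI_neq f a z b) by lia] end.
Ltac simpR := repeat match goal with |- context [updR ?f ?a ?z ?b] =>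
  first [rewrite (updR_eq f a z) | rewrite (updR_neq f a z b) by lia] end.
Ltac zn := rewrite <- ?Nat2Z.inj_add, <- ?Nat2Z.inj_mul, ?addr_of.

Ltac go :=
  match goal with |- reach _ (mkState ?q _ _) _ _ =>
  let ins := eval compute in (nth q P0 Halt) in
  match ins with
  | IConst _ _ => eapply rs_IConst; [reflexivity|lia|]
  | IAdd _ _ _ => eapply rs_IAdd; [reflexivity|lia|lia|lia|]
  | ISub _ _ _ => eapply rs_ISub; [reflexivity|lia|lia|lia|]
  | IMul _ _ _ => eapply rs_IMul; [reflexivity|lia|lia|lia|]
  | RofI _ _ => eapply rs_RofI; [reflexivity|lia|lia|]
  | RAdd _ _ _ => eapply rs_RAdd; [reflexivity|lia|lia|lia|]
  | RSub _ _ _ => eapply rs_RSub; [reflexivity|lia|lia|lia|]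
  | RMul _ _ _ => eapply rs_RMul; [reflexivity|lia|lia|lia|]
  | RSqrt _ _ => eapply rs_RSqrt; [reflexivity|lia|lia|]
  | RLoad _ _ => eapply rs_RLoad; [reflexivity|lia|lia| |]
  | RStore _ _ => eapply rs_RStore; [reflexivity|lia|lia| |]
  | Jmp _ => eapply rs_Jmp; [reflexivity|]
  end end.
Ltac goT := match goal with |- reach _ (mkState ?q _ _) _ _ =>
  let ins := eval compute in (nth q P0 Halt) in
  match ins with
  | JmpILt _ _ _ => eapply rs_JmpILt_T; [reflexivity|lia|lia| |]
  | JmpRLt _ _ _ => eapply rs_JmpRLt_T; [reflexivity|lia|lia| |]
  end end.
Ltac goF := match goal with |- reach _ (mkState ?q _ _) _ _ =>
  let ins := eval compute in (nth q P0 Halt) in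
  match ins with
  | JmpILt _ _ _ => eapply rs_JmpILt_F; [reflexivity|lia|lia| |]
  | JmpRLt _ _ _ => eapply rs_JmpRLt_F; [reflexivity|lia|lia| |]
  end end.

Ltac rwh := repeat match goal with H : ?f ?k = _ |- context [?f ?k] => rewrite H end.
Ltac nrm := simpI; rwh; zn; simpR; rwh; rewrite ?Rplus_0_r.
Ltac g := go; nrm.
Ltac gT := goT; nrm.
Ltac gF := goF; nrm.

Section Prog.
Variables (d n m : nat) (U C : nat -> nat -> R) (r : nat -> R) (inp : nat -> R) (L D0 G0 Sp : nat).
Hypotheses (Hd : (1 <= d)%nat) (Hn : (1 <= n)%nat) (Hm : (1 <= m)%nat)
  (HL : (L = n*d + m*d + m)%nat) (HD0 : (D0 = L + 8)%nat) (HG0 : (G0 = D0 + L)%nat) (HSp : (G0 + n + 20 <= Sp)%nat)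
  (HU : forall i k, (i < n)%nat -> (k < d)%nat -> inp (i*d + k)%nat = U i k)
  (HC : forall j k, (j < m)%nat -> (k < d)%nat -> inp (n*d + j*d + k)%nat = C j k)
  (Hr : forall j, (j < m)%nat -> inp (n*d + m*d + j)%nat = r j).

Let E := fun a b => dist d (U a) (C b) + r b.

Definition common (I : nat -> Z) := I 0%nat = Z.of_nat n /\ I 1%nat = Z.of_nat m /\ I 2%nat = Z.of_nat d /\
  I 3%nat = 1%Z /\ I 5%nat = Z.of_nat D0 /\ I 14%nat = Z.of_nat G0 /\ I 16%nat = 0%Z.
Definition memok (Rm : nat -> R) := (forall b, (b < L)%nat -> Rm (D0 + b)%nat = inp b) /\ Rm 6%nat = 0.
Definition arr (Rm : nat -> R) j i := forall i', (i' < n)%nat ->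
  ((i' < i)%nat -> Rm (G0 + i')%nat = DPH E j i') /\ ((i <= i')%nat -> (0 < j)%nat -> Rm (G0 + i')%nat = DPH E (j-1) i').

Ltac memtac := unfold memok; split; [intros ? ?; simpR; auto | simpR; auto].

Lemma common_upd I a z : common I -> a <> 0%nat -> a <> 1%nat -> a <> 2%nat -> a <> 3%nat -> a <> 5%nat ->
  a <> 14%nat -> a <> 16%nat -> common (updI I a z).
Proof. intros (H0 & H1 & H2 & H3 & H5 & H14 & H16) ? ? ? ? ? ? ?. unfold common. simpI. tauto. Qed.

Lemma memok_upd Rm a x : memok Rm -> (a < 6)%nat -> memok (updR Rm a x).
Proof. intros [H1 H2] Ha. split. intros b Hb. simpR. auto. simpR. auto. Qed.

Lemma arr_upd Rm a x j i : arr Rm j i -> (a < 8)%nat -> arr (updR Rm a x) j i.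
Proof. intros H Ha i' Hi'. simpR. auto. Qed.

Definition KInv j i k (s : state) := pc s = 37%nat /\ common (imem s) /\
  imem s 8%nat = Z.of_nat j /\ imem s 9%nat = Z.of_nat i /\ imem s 12%nat = Z.of_nat (D0 + n*d + j*d) /\
  imem s 13%nat = Z.of_nat (D0 + n*d + m*d + j) /\ imem s 11%nat = Z.of_nat (D0 + i*d) /\
  imem s 10%nat = Z.of_nat k /\ memok (rmem s) /\ rmem s 4%nat = prv E j i /\ arr (rmem s) j i /\
  rmem s 1%nat = sumR k (fun k' => (U i k' - C j k')^2) /\ (k <= d)%nat /\ (i < n)%nat /\ (j < m)%nat.

Lemma kbody j i k s : (k < d)%nat -> KInv j i k s -> reach Sp s 10 (KInv j i (S k)).
Proof.
  intros Hk (Hpc & Hc & H8 & H9 & H12 & H13 & H11 & H10 & Hmem & H4 & Harr & H1 & Hkd & Hin & Hjm).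
  destruct s as [q I Rm]; cbn [pc imem rmem] in *; subst q.
  destruct Hc as (I0 & I1 & I2 & I3 & I5 & I14 & I16).
  gT. { lia. }
  g. g. { zn. nia. }
  g. g. { zn. nia. }
  g. g. g. g. g.
  apply reach_done.
  assert (Eu : Rm (D0 + i * d + k)%nat = U i k).
  { rewrite <- Nat.add_assoc, (proj1 Hmem) by nia. apply HU; lia. }
  assert (Ec : Rm (D0 + n * d + j * d + k)%nat = C j k).
  { replace (D0 + n * d + j * d + k)%nat with (D0 + (n * d + j * d + k))%nat by lia.
    rewrite (proj1 Hmem) by nia. apply HC; lia. }
  rewrite Eu, Ec.
  unfold KInv; cbn [pc imem rmem].
  split; [auto|]. split.
  { repeat (apply common_upd; try lia). unfold common; repeat split; auto. }
  split. { simpI. auto. }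
  split. { simpI. auto. }
  split. { simpI. auto. }
  split. { simpI. auto. }
  split. { simpI. auto. }
  split. { simpI. lia. }
  split. { repeat apply memok_upd; auto; lia. }
  split. { simpR. auto. }
  split. { repeat apply arr_upd; auto; lia. }
  split. { simpR. cbn [sumR]. ring. }
  lia.
Qed.

Lemma kloop j i s : KInv j i 0 s -> reach Sp s (d * 10) (KInv j i d).
Proof.
  intros H0. apply (reach_loop Sp (fun k => KInv j i k) d 10); auto.
  intros k s' Hk Hs'. apply kbody; auto.
Qed.

Definition IInv j i (s : state) := pc s = 31%nat /\ common (imem s) /\
  imem s 8%nat = Z.of_nat j /\ imem s 9%nat = Z.of_nat i /\ imem s 12%nat = Z.of_nat (D0 + n*d + j*d) /\
  imem s 13%nat = Z.of_nat (D0 + n*d + m*d + j) /\ memok (rmem s) /\ rmem s 4%nat = prv E j i /\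
  arr (rmem s) j i /\ (i <= n)%nat /\ (j < m)%nat.

Lemma rowstart j i s : (i < n)%nat -> IInv j i s -> reach Sp s 5 (KInv j i 0).
Proof.
  intros Hi (Hpc & Hc & H8 & H9 & H12 & H13 & [Hmem H6] & H4 & Harr & Hin & Hjm).
  destruct s as [q I Rm]; cbn [pc imem rmem] in *; subst q.
  destruct Hc as (I0 & I1 & I2 & I3 & I5 & I14 & I16).
  gT. { lia. }
  g. g. g. g. apply reach_done.
  unfold KInv; cbn [pc imem rmem].
  split; [auto|]. split.
  { repeat (apply common_upd; try lia). unfold common; repeat split; auto. }
  split. { simpI. auto. }
  split. { simpI. auto. }
  split. { simpI. auto. }
  split. { simpI. auto. }
  split. { simpI. f_equal. lia. }
  split. { simpI. auto. }
  split. { apply memok_upd; [split; auto|lia]. }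
  split. { simpR. auto. }
  split. { apply arr_upd; auto; lia. }
  split. { simpR. simpl. auto. }
  lia.
Qed.

Definition Mid j i (pcv : nat) (x : R) (s : state) := pc s = pcv /\ common (imem s) /\
  imem s 8%nat = Z.of_nat j /\ imem s 9%nat = Z.of_nat i /\ imem s 12%nat = Z.of_nat (D0 + n*d + j*d) /\
  imem s 13%nat = Z.of_nat (D0 + n*d + m*d + j) /\ memok (rmem s) /\ rmem s 4%nat = prv E j i /\
  arr (rmem s) j i /\ rmem s 5%nat = x /\ (pcv = 61%nat -> imem s 7%nat = Z.of_nat (G0 + i)) /\
  (i < n)%nat /\ (j < m)%nat.

Lemma segA j i s : KInv j i d s -> reach Sp s 7 (Mid j i 54 (Rmax (E i j) (prv E j i))).
Proof.
  intros (Hpc & Hc & H8 & H9 & H12 & H13 & H11 & H10 & [Hmem H6] & H4 & Harr & H1 & Hkd & Hin & Hjm).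
  destruct s as [q I Rm]; cbn [pc imem rmem] in *; subst q.
  destruct Hc as (I0 & I1 & I2 & I3 & I5 & I14 & I16).
  gF. { lia. }
  g. g. g. { nia. }
  assert (Er : Rm (D0 + n * d + m * d + j)%nat = r j).
  { replace (D0 + n * d + m * d + j)%nat with (D0 + (n * d + m * d + j))%nat by lia.
    rewrite Hmem by nia. apply Hr; lia. }
  rewrite Er.
  g.
  assert (Ee : sqrt (sumR d (fun k' : nat => (U i k' - C j k') ^ 2)) + r j = E i j) by reflexivity.
  rewrite Ee.
  destruct (Rlt_dec (E i j) (prv E j i)) as [Hlt|Hge].
  - gT. { auto. } g.
    apply reach_mono with 0%nat; [lia|]. apply reach_done.
    unfold Mid; cbn [pc imem rmem].
    split; [auto|]. split. { unfold common; repeat split; auto. }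
    do 4 (split; [auto|]).
    split. { memtac. }
    split. { simpR. auto. }
    split. { repeat apply arr_upd; auto; lia. }
    split. { simpR. unfold Rmax; destruct Rle_dec; lra. }
    split. { intros; lia. }
    lia.
  - gF. { lra. } g.
    apply reach_mono with 0%nat; [lia|]. apply reach_done.
    unfold Mid; cbn [pc imem rmem].
    split; [auto|]. split. { unfold common; repeat split; auto. }
    do 4 (split; [auto|]).
    split. { memtac. }
    split. { simpR. auto. }
    split. { repeat apply arr_upd; auto; lia. }
    split. { simpR. unfold Rmax; destruct Rle_dec; lra. }
    split. { intros; lia. }
    lia.
Qed.

Lemma segB j i s : Mid j i 54 (Rmax (E i j) (prv E j i)) s -> reach Sp s 5 (Mid j i 61 (DPH E j i)).
Proof.
  intros (Hpc & Hc & H8 & H9 & H12 & H13 & [Hmem H6] & H4 & Harr & H5 & _ & Hin & Hjm).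
  destruct s as [q I Rm]; cbn [pc imem rmem] in *; subst q.
  destruct Hc as (I0 & I1 & I2 & I3 & I5 & I14 & I16).
  g. destruct j as [|j'].
  - gF. { lia. } g.
    apply reach_mono with 0%nat; [lia|]. apply reach_done.
    unfold Mid; cbn [pc imem rmem].
    split; [auto|]. split. { repeat (apply common_upd; try lia). unfold common; repeat split; auto. }
    do 4 (split; [simpI; auto|]).
    split. { memtac. }
    split. { simpR. auto. }
    split. { repeat apply arr_upd; auto; lia. }
    split. { simpR. rewrite H_0. auto. }
    split. { intros; simpI. f_equal; lia. }
    lia.
  - gT. { lia. } g. { nia. }
    assert (Eg : Rm (G0 + i)%nat = DPH E j' i).
    { destruct (Harr i Hin) as [_ Hg]. rewrite Hg by lia. f_equal. lia. }
    rewrite Eg.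
    destruct (Rlt_dec (DPH E j' i) (Rmax (E i (S j')) (prv E (S j') i))) as [Hlt|Hge].
    + gT. { auto. } g.
      apply reach_mono with 0%nat; [lia|]. apply reach_done.
      unfold Mid; cbn [pc imem rmem].
      split; [auto|]. split. { repeat (apply common_upd; try lia). unfold common; repeat split; auto. }
      do 4 (split; [simpI; auto|]).
      split. { memtac. }
      split. { simpR. auto. }
      split. { repeat apply arr_upd; auto; lia. }
      split. { simpR. rewrite H_S. unfold Rmin; destruct Rle_dec; lra. }
      split. { intros; simpI. f_equal; lia. }
      lia.
    + gF. { lra. } g.
      apply reach_mono with 0%nat; [lia|]. apply reach_done.
      unfold Mid; cbn [pc imem rmem].
      split; [auto|]. split. { repeat (apply common_upd; try lia). unfold common; repeat split; auto. }
      do 4 (split; [simpI; auto|]).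
      split. { memtac. }
      split. { simpR. auto. }
      split. { repeat apply arr_upd; auto; lia. }
      split. { simpR. rewrite H_S. unfold Rmin; destruct Rle_dec; lra. }
      split. { intros; simpI. f_equal; lia. }
      lia.
Qed.

Lemma segC j i s : Mid j i 61 (DPH E j i) s -> reach Sp s 4 (IInv j (S i)).
Proof.
  intros (Hpc & Hc & H8 & H9 & H12 & H13 & [Hmem H6] & H4 & Harr & H5 & H7 & Hin & Hjm).
  destruct s as [q I Rm]; cbn [pc imem rmem] in *; subst q. specialize (H7 eq_refl).
  destruct Hc as (I0 & I1 & I2 & I3 & I5 & I14 & I16).
  g. { lia. } g. g. g.
  apply reach_done.
  unfold IInv; cbn [pc imem rmem].
  split; [auto|]. split. { repeat (apply common_upd; try lia). unfold common; repeat split; auto. }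
  split. { simpI. auto. }
  split. { simpI. lia. }
  split. { simpI. auto. }
  split. { simpI. auto. }
  split. { memtac. }
  split. { simpR. reflexivity. }
  split.
  { intros i' Hi'. destruct (Nat.eq_dec i' i) as [->|Hne].
    - split; [|lia]. intros _. simpR. auto.
    - destruct (Harr i' Hi') as [Ha1 Ha2]. split.
      + intros Hlt. simpR. apply Ha1. lia.
      + intros Hle Hj. simpR. apply Ha2; lia. }
  lia.
Qed.

Lemma rowbody j i s : (i < n)%nat -> IInv j i s -> reach Sp s (5 + d * 10 + 16) (IInv j (S i)).
Proof.
  intros Hi Hs. rewrite <- !Nat.add_assoc.
  eapply reach_trans. apply rowstart; eauto. intros s1 H1.
  eapply reach_trans. apply kloop; eauto. intros s2 H2.
  replace 16%nat with (7 + (5 + 4))%nat by reflexivity.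
  eapply reach_trans. apply segA; eauto. intros s3 H3.
  eapply reach_trans. apply segB; eauto. intros s4 H4.
  apply segC; auto.
Qed.

Lemma rowloop j s : IInv j 0 s -> reach Sp s (n * (5 + d * 10 + 16)) (IInv j n).
Proof.
  intros H0. apply (reach_loop Sp (fun i => IInv j i) n); auto.
  intros k s' Hk Hs'. apply rowbody; auto.
Qed.

Definition JInv j (s : state) := pc s = 19%nat /\ common (imem s) /\
  imem s 8%nat = Z.of_nat j /\ memok (rmem s) /\ arr (rmem s) j 0 /\ (j <= m)%nat.

Lemma colstart j s : (j < m)%nat -> JInv j s -> reach Sp s 11 (IInv j 0).
Proof.
  intros Hj (Hpc & Hc & H8 & [Hmem H6] & Harr & Hjm).
  destruct s as [q I Rm]; cbn [pc imem rmem] in *; subst q.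
  destruct Hc as (I0 & I1 & I2 & I3 & I5 & I14 & I16).
  gT. { lia. }
  g. g. g. g. g. g. g. g. g. g.
  apply reach_done.
  unfold IInv; cbn [pc imem rmem].
  split; [auto|]. split. { repeat (apply common_upd; try lia). unfold common; repeat split; auto. }
  split. { simpI. auto. }
  split. { simpI. auto. }
  split. { simpI. f_equal. lia. }
  split. { simpI. f_equal. lia. }
  split. { memtac. }
  split. { simpR. reflexivity. }
  split. { repeat apply arr_upd; auto; try lia. }
  lia.
Qed.

Lemma colend j s : IInv j n s -> reach Sp s 4 (JInv (S j)).
Proof.
  intros (Hpc & Hc & H8 & H9 & H12 & H13 & [Hmem H6] & H4 & Harr & Hin & Hjm).
  destruct s as [q I Rm]; cbn [pc imem rmem] in *; subst q.
  destruct Hc as (I0 & I1 & I2 & I3 & I5 & I14 & I16).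
  gF. { lia. } g. g. g.
  apply reach_done.
  unfold JInv; cbn [pc imem rmem].
  split; [auto|]. split. { repeat (apply common_upd; try lia). unfold common; repeat split; auto. }
  split. { simpI. lia. }
  split. { split; auto. }
  split. { intros i' Hi'. split; [lia|]. intros _ _. destruct (Harr i' Hi') as [Ha _].
           rewrite Ha by lia. f_equal. lia. }
  lia.
Qed.

Lemma colbody j s : (j < m)%nat -> JInv j s -> reach Sp s (11 + (n * (5 + d * 10 + 16) + 4)) (JInv (S j)).
Proof.
  intros Hj Hs.
  eapply reach_trans. apply colstart; eauto. intros s1 H1.
  eapply reach_trans. apply rowloop; eauto. intros s2 H2.
  apply colend; auto.
Qed.

Lemma colloop s : JInv 0 s -> reach Sp s (m * (11 + (n * (5 + d * 10 + 16) + 4))) (JInv m).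
Proof.
  intros H0. apply (reach_loop Sp JInv m); auto.
  intros k s' Hk Hs'. apply colbody; auto.
Qed.

Lemma finish s : JInv m s -> reach Sp s 5 (fun s => halted P0 s /\ rmem s 0%nat = DPH E (m-1) (n-1)).
Proof.
  intros (Hpc & Hc & H8 & [Hmem H6] & Harr & Hjm).
  destruct s as [q I Rm]; cbn [pc imem rmem] in *; subst q.
  destruct Hc as (I0 & I1 & I2 & I3 & I5 & I14 & I16).
  gF. { lia. } g. g. g.
  replace (Z.of_nat (G0 + n) - 1)%Z with (Z.of_nat (G0 + (n - 1))) by lia.
  g. { zn. lia. }
  apply reach_done. split. reflexivity. cbn [rmem]. simpR.
  destruct (Harr (n-1)%nat ltac:(lia)) as [_ Ha]. apply Ha; lia.
Qed.
End Prog.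


Section Top.
Variables (d n m : nat) (U C : nat -> nat -> R) (r : nat -> R) (L D0 G0 Sp : nat).
Hypotheses (Hd : (1 <= d)%nat) (Hn : (1 <= n)%nat) (Hm : (1 <= m)%nat)
  (HL : (L = n*d + m*d + m)%nat) (HD0 : (D0 = L + 8)%nat) (HG0 : (G0 = D0 + L)%nat) (HSp : (G0 + n + 20 <= Sp)%nat).

Let inp := rmem (init_state d n m U C r).

Lemma divmod_ok i k : (k < d)%nat -> ((i * d + k) / d = i /\ (i * d + k) mod d = k)%nat.
Proof.
  intros Hk. split.
  - rewrite Nat.div_add_l by lia. rewrite Nat.div_small by lia. lia.
  - rewrite Nat.add_comm, Nat.mod_add by lia. apply Nat.mod_small; lia.
Qed.

Lemma HU : forall i k, (i < n)%nat -> (k < d)%nat -> inp (i*d + k)%nat = U i k.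
Proof.
  intros i k Hi Hk. unfold inp, init_state; cbn [rmem].
  destruct (Nat.ltb_spec (i*d+k) (n*d)); [|nia].
  destruct (divmod_ok i k Hk) as [-> ->]. auto.
Qed.

Lemma HC : forall j k, (j < m)%nat -> (k < d)%nat -> inp (n*d + j*d + k)%nat = C j k.
Proof.
  intros j k Hj Hk. unfold inp, init_state; cbn [rmem].
  destruct (Nat.ltb_spec (n*d + j*d+k) (n*d)); [lia|].
  destruct (Nat.ltb_spec (n*d + j*d+k) (n*d + m*d)); [|nia].
  replace (n * d + j * d + k - n * d)%nat with (j*d+k)%nat by lia.
  destruct (divmod_ok j k Hk) as [-> ->]. auto.
Qed.

Lemma Hr : forall j, (j < m)%nat -> inp (n*d + m*d + j)%nat = r j.
Proof.
  intros j Hj. unfold inp, init_state; cbn [rmem].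
  destruct (Nat.ltb_spec (n*d + m*d+j) (n*d)); [lia|].
  destruct (Nat.ltb_spec (n*d + m*d+j) (n*d + m*d)); [lia|].
  destruct (Nat.ltb_spec (n*d + m*d+j) (n*d + m*d + m)); [|lia].
  f_equal. lia.
Qed.

Definition CInv a (s : state) := pc s = 8%nat /\ imem s 0%nat = Z.of_nat n /\ imem s 1%nat = Z.of_nat m /\
  imem s 2%nat = Z.of_nat d /\ imem s 3%nat = 1%Z /\ imem s 4%nat = Z.of_nat L /\ imem s 5%nat = Z.of_nat D0 /\
  imem s 6%nat = Z.of_nat a /\
  (forall b, (D0 <= b < D0 + a)%nat -> rmem s b = inp (b - D0)%nat) /\
  (forall b, (1 <= b < L)%nat -> rmem s b = inp b) /\ (a = 0%nat -> rmem s 0%nat = inp 0%nat) /\ (a <= L)%nat.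

Lemma setup : reach Sp (init_state d n m U C r) 8 (CInv 0).
Proof.
  unfold init_state.
  set (I0 := fun a : nat => match a with 0%nat => Z.of_nat n | 1%nat => Z.of_nat m | 2%nat => Z.of_nat d | _ => 0%Z end).
  assert (E0 : I0 0%nat = Z.of_nat n) by reflexivity.
  assert (E1 : I0 1%nat = Z.of_nat m) by reflexivity.
  assert (E2 : I0 2%nat = Z.of_nat d) by reflexivity.
  fold inp. clearbody I0.
  g. g. g. g. g. g. g. g.
  apply reach_done. unfold CInv; cbn [pc imem rmem].
  split; [auto|].
  split. { simpI. auto. }
  split. { simpI. auto. }
  split. { simpI. auto. }
  split. { simpI. auto. }
  split. { simpI. zn. f_equal. lia. }
  split. { simpI. zn. f_equal. lia. }
  split. { simpI. auto. }
  split. { intros; lia. }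
  split. { auto. }
  split. { auto. }
  lia.
Qed.

Lemma copybody a s : (a < L)%nat -> CInv a s -> reach Sp s 6 (CInv (S a)).
Proof.
  intros Ha (Hpc & I0 & I1 & I2 & I3 & I4 & I5 & I6 & Hc & Hsrc & Hz & HaL).
  destruct s as [q I Rm]; cbn [pc imem rmem] in *; subst q.
  assert (Hv : Rm a = inp a).
  { destruct (Nat.eq_dec a 0) as [->|]; auto. apply Hsrc; lia. }
  gT. { lia. } g. { lia. } g. g. { lia. } g. g.
  apply reach_done. unfold CInv; cbn [pc imem rmem].
  split; [auto|].
  do 6 (split; [simpI; auto|]).
  split. { simpI. lia. }
  split. { intros b Hb. destruct (Nat.eq_dec b (D0 + a)) as [->|Hne].
           - simpR. try rewrite Hv. f_equal. lia.
           - simpR. apply Hc. lia. }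
  split. { intros b Hb. simpR. auto. }
  split. { intros; lia. }
  lia.
Qed.

Lemma copyloop s : CInv 0 s -> reach Sp s (L * 6) (CInv L).
Proof.
  intros H0. apply (reach_loop Sp CInv L 6); auto.
  intros k s' Hk Hs'. apply copybody; auto.
Qed.

Lemma copyexit s : CInv L s -> reach Sp s 6 (JInv d n m U C r inp L D0 G0 0).
Proof.
  intros (Hpc & I0 & I1 & I2 & I3 & I4 & I5 & I6 & Hc & Hsrc & Hz & HaL).
  destruct s as [q I Rm]; cbn [pc imem rmem] in *; subst q.
  gF. { lia. } g. g. g. g. g.
  apply reach_done. unfold JInv; cbn [pc imem rmem].
  split; [auto|].
  split. { unfold common. simpI. repeat split; auto; f_equal; lia. }
  split. { simpI. auto. }
  split. { unfold memok. split.
    - intros b Hb. simpR. rewrite Hc by lia. f_equal. lia.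
    - simpR. reflexivity. }
  split. { intros i' Hi'. split; intros; lia. }
  lia.
Qed.

End Top.

Lemma arith_bounds d n m L D0 G0 t : (1 <= d)%nat -> (1 <= n)%nat -> (1 <= m)%nat -> L = (n*d+m*d+m)%nat -> D0 = (L + 8)%nat -> G0 = (D0 + L)%nat ->
  (t <= 8 + (L * 6 + (6 + (m * (11 + (n * (5 + d * 10 + 16) + 4)) + 5))))%nat ->
  (G0 + n + 20 <= 100 * d * (m + n) /\ t <= 100 * d * m * n)%nat.
Proof.
  intros Hd Hn Hm HL HD HG Ht. subst.
  assert (A1 : (m <= d*m)%nat) by nia. assert (A2 : (n <= d*n)%nat) by nia. assert (A3 : (1 <= d*m)%nat) by nia.
  assert (B1 : (n*d <= d*m*n)%nat) by nia. assert (B2 : (m*d <= d*m*n)%nat) by nia.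
  assert (B3 : (m <= d*m*n)%nat) by nia. assert (B4 : (m*n <= d*m*n)%nat) by nia. assert (B5 : (1 <= d*m*n)%nat) by nia.
  split; nia.
Qed.

Theorem theorem4p4 :
  exists (P : list instr) (c : nat),
  forall (d n m : nat) (U C : nat -> nat -> R) (r : nat -> R),
    (1 <= d)%nat -> (1 <= n)%nat -> (1 <= m)%nat ->
    (forall j, (j < m)%nat -> 0 < r j) ->
    exists (t : nat) (s : state),
      (t <= c * d * m * n)%nat /\
      exec P (c * d * (m + n)) t (init_state d n m U C r) s /\
      halted P s /\
      frechet_max1 d n m U C r (rmem s 0).
Proof.
  exists P0, 100%nat. intros d n m U C r Hd Hn Hm Hrp.
  set (L := (n*d + m*d + m)%nat). set (D0 := (L + 8)%nat). set (G0 := (D0 + L)%nat).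
  assert (HSp : (G0 + n + 20 <= 100 * d * (m + n))%nat) by (apply (arith_bounds d n m L D0 G0 0); unfold G0, D0, L; auto; lia).
  assert (HL : L = (n*d + m*d + m)%nat) by reflexivity.
  assert (HD0 : D0 = (L + 8)%nat) by reflexivity.
  assert (HG0 : G0 = (D0 + L)%nat) by reflexivity.
  clearbody L D0 G0.
  assert (Hreach : reach (100 * d * (m + n)) (init_state d n m U C r)
    (8 + (L * 6 + (6 + (m * (11 + (n * (5 + d * 10 + 16) + 4)) + 5))))
    (fun s => halted P0 s /\ rmem s 0%nat = DPH (fun a b => dist d (U a) (C b) + r b) (m-1) (n-1))).
  { eapply reach_trans. { eapply (setup d n m U C r L D0 G0); auto. } intros s1 H1.
    eapply reach_trans. { apply (copyloop d n m U C r L D0 G0); auto. } intros s2 H2.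
    eapply reach_trans. { apply (copyexit d n m U C r L D0 G0); auto. } intros s3 H3.
    eapply reach_trans. { apply (colloop d n m U C r (rmem (init_state d n m U C r)) L D0 G0); auto.
      - intros; apply (HU d n m U C r L D0 G0 (100*d*(m+n))); auto.
      - intros; apply (HC d n m U C r L D0 G0 (100*d*(m+n))); auto.
      - intros; apply (Hr d n m U C r L D0 G0 (100*d*(m+n))); auto. }
    intros s4 H4. apply (finish d n m U C r (rmem (init_state d n m U C r)) L D0 G0); auto. }
  destruct Hreach as (t & s & Ht & Hex & Hhalt & Hval).
  exists t, s. split.
  { apply (arith_bounds d n m L D0 G0 t); auto. }
  split; [exact Hex|]. split; [exact Hhalt|].
  rewrite Hval. apply math_main; auto.
Qed.
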